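(* Let $F=A^\sharp\circ B\circ P$, where $A\in\mathbb{T}^{m\times n}$ has at least one finite entry per column, $B\in\mathbb{T}^{m\times q}$ has at least one finite entry per row, the finite entries of $A,B$ are integers, and $P\in\mathbb{R}^{q\times n}$ is row-stochastic with $P_{il}=Q_{il}/M$ for integers $Q_{il}$ and a positive integer $M$. Suppose $F$ has a bias vector, and let $v^\ast$ be its Blackwell bias. Then \[ R(F)\le\|v^\ast\|_H\le 10\,n^2\,W\,M^{\min\{k,n-1\}}, \] where $k$ is the number of nondeterministic states.
   Context: $\mathbb{T}=\mathbb{R}\cup\{-\infty\}$; $\mathbb{0}=-\infty$. For $C\in\mathbb{T}^{r\times s}$: $(C\odot z)_i=\max_j(C_{ij}+z_j)$; $C^\sharp(y)_j=\min_i(-C_{ij}+y_i)$ with $(+\infty)+(-\infty)=+\infty$; $Pz$ is the usual product with $0\cdot(-\infty)=0$; so $F(x)=A^\sharp(B\odot(Px))$ maps $\mathbb{R}^n$ to $\mathbb{R}^n$. $W=\max\{|A_{ij}-B_{ih}|: A_{ij}\ne-\infty,\ B_{ih}\ne-\infty,\ i\in[m],\ j\in[n],\ h\in[q]\}$. A state $i\in[q]$ is nondeterministic if $P_{il}>0$ and $P_{il'}>0$ for some $l\ne l'$. $\|x\|_H=\max_i x_i-\min_i x_i$. A bias vector is $v\in\mathbb{R}^n$ with $F(v)=\lambda+v$ for some $\lambda\in\mathbb{R}$; $\lambda=\rho(F)$ is unique (ergodic constant). $R(F)=\inf\{\|u\|_H: u\in\mathbb{R}^n,\ F(u)=\rho(F)+u\}$.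 For $0<\alpha<1$, $v_\alpha\in\mathbb{R}^n$ denotes the unique solution of $v_\alpha=F(\alpha v_\alpha)$ (value of the discounted game); the limit $v^\ast=\lim_{\alpha\to1^-}\bigl(v_\alpha-\rho(F)/(1-\alpha)\bigr)$ exists and is a bias vector, called the Blackwell bias. *)

(* Defs.v *)
From Stdlib Require Import Reals List Arith ZArith Bool.
Import ListNotations.
Open Scope R_scope.

(* Tropical numbers T = R U {-oo}: None = -oo. *)
Definition trop := option R.

(* Extended reals, used for the values of the residuation A^# before they
   are known to be finite. *)
Inductive ext : Type := Ninf | Fin (r : R) | Pinf.

Fixpoint sumR (f : nat -> R) (n : nat) : R :=
  match n with O => 0 | S k => sumR f k + f k end.

(* max / min over the index set {0,...,n-1}; for n = 0 both return f 0,
   so that the Hilbert seminorm of a vector of R^0 is 0. *)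
Definition maxI (n : nat) (f : nat -> R) : R := fold_right Rmax (f O) (map f (seq 0 n)).
Definition minI (n : nat) (f : nat -> R) : R := fold_right Rmin (f O) (map f (seq 0 n)).

Definition hilbert (n : nat) (x : nat -> R) : R := maxI n x - minI n x.

Definition matvec (n : nat) (P : nat -> nat -> R) (z : nat -> R) (h : nat) : R :=
  sumR (fun l => P h l * z l) n.

Definition omax (a b : trop) : trop :=
  match a, b with
  | None, _ => b
  | _, None => a
  | Some x, Some y => Some (Rmax x y)
  end.
Definition tprod (s : nat) (C : nat -> nat -> trop) (z : nat -> R) (i : nat) : trop :=
  fold_right omax None
    (map (fun j => match C i j with None => None | Some c => Some (c + z j) end) (seq 0 s)).

(* residuation C^#(y)_j = min_{i<r} (-C_ij + y_i), with (+oo)+(-oo) = +oo *)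
Definition emin (a b : ext) : ext :=
  match a, b with
  | Pinf, _ => b
  | _, Pinf => a
  | Ninf, _ => Ninf
  | _, Ninf => Ninf
  | Fin x, Fin y => Fin (Rmin x y)
  end.
Definition tsharp (r : nat) (C : nat -> nat -> trop) (y : nat -> trop) (j : nat) : ext :=
  fold_right emin Pinf
    (map (fun i => match C i j with
                   | None => Pinf                      (* -(-oo) + y_i = +oo *)
                   | Some c => match y i with
                               | None => Ninf
                               | Some b => Fin (- c + b)
                               end
                   end) (seq 0 r)).

(* The operator F(x) = A^#(B (.) (P x)), A : m x n, B : m x q, P : q x n.
   Under the standing hypotheses every value is finite; the default 0
   for infinite values is never used then. *)
Definition Fop (m n q : nat) (A B : nat -> nat -> trop) (P : nat -> nat -> R)
  (x : nat -> R) (j : nat) : R :=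
  match tsharp m A (tprod q B (matvec n P x)) j with
  | Fin r => r
  | _ => 0
  end.

Definition is_bias (n : nat) (F : (nat -> R) -> nat -> R) (v : nat -> R) (lam : R) : Prop :=
  forall j, (j < n)%nat -> F v j = lam + v j.

Definition is_inf (S : R -> Prop) (r : R) : Prop :=
  (forall s, S s -> r <= s) /\ (forall b, (forall s, S s -> b <= s) -> b <= r).

Definition Wconst (m n q : nat) (A B : nat -> nat -> trop) : R :=
  fold_right Rmax 0
    (flat_map (fun i => flat_map (fun j => flat_map (fun h =>
       match A i j, B i h with
       | Some a, Some b => [Rabs (a - b)]
       | _, _ => []
       end) (seq 0 q)) (seq 0 n)) (seq 0 m)).

Definition posb (x : R) : bool := if Rlt_dec 0 x then true else false.

Definition nondetb (n : nat) (P : nat -> nat -> R) (i : nat) : bool :=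
  existsb (fun l => existsb (fun l' =>
    andb (andb (negb (Nat.eqb l l')) (posb (P i l))) (posb (P i l'))) (seq 0 n)) (seq 0 n).

Definition num_nondet (n q : nat) (P : nat -> nat -> R) : nat :=
  length (filter (nondetb n P) (seq 0 q)).

(* Main.v *)
Require Import Defs.
From Stdlib Require Import Reals List Arith ZArith Lra Lia Classical.
Import ListNotations.
Open Scope R_scope.

Lemma sumR_ext (f g : nat -> R) n : (forall l, (l < n)%nat -> f l = g l) -> sumR f n = sumR g n.
Proof. induction n; simpl; intros H; auto. rewrite IHn by (intros; apply H; lia). rewrite (H n) by lia; auto. Qed.

Lemma sumR_le (f g : nat -> R) n : (forall l, (l < n)%nat -> f l <= g l) -> sumR f n <= sumR g n.
Proof. induction n; simpl; intros H; [lra|]. assert (sumR f n <= sumR g n) by (apply IHn; intros; apply H; lia).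
 assert (f n <= g n) by (apply H; lia). lra. Qed.

Lemma sumR_plus (f g : nat -> R) n : sumR (fun l => f l + g l) n = sumR f n + sumR g n.
Proof. induction n; simpl; [lra|]. rewrite IHn; lra. Qed.

Lemma sumR_minus (f g : nat -> R) n : sumR (fun l => f l - g l) n = sumR f n - sumR g n.
Proof. induction n; simpl; [lra|]. rewrite IHn; lra. Qed.

Lemma sumR_scal (f : nat -> R) c n : sumR (fun l => c * f l) n = c * sumR f n.
Proof. induction n; simpl; [lra|]. rewrite IHn; lra. Qed.

Lemma sumR_nonneg (f : nat -> R) n : (forall l, (l < n)%nat -> 0 <= f l) -> 0 <= sumR f n.
Proof. induction n; simpl; intros H; [lra|].
 assert (0 <= sumR f n) by (apply IHn; intros; apply H; lia). assert (0 <= f n) by (apply H; lia). lra. Qed.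

Lemma sumR_single_le (f : nat -> R) n s : (forall l, (l < n)%nat -> 0 <= f l) -> (s < n)%nat -> f s <= sumR f n.
Proof. induction n; simpl; intros H Hs; [lia|].
 destruct (Nat.eq_dec s n) as [->|Hne].
 - assert (0 <= sumR f n) by (apply sumR_nonneg; intros; apply H; lia). lra.
 - assert (f s <= sumR f n) by (apply IHn; [intros; apply H; lia| lia]). assert (0 <= f n) by (apply H; lia). lra.
Qed.

Lemma sumR_single (f : nat -> R) n s : (forall l, (l < n)%nat -> l <> s -> f l = 0) -> (s < n)%nat -> sumR f n = f s.
Proof. induction n; simpl; intros H Hs; [lia|].
 destruct (Nat.eq_dec s n) as [->|Hne].
 - assert (Z0 : forall k, (k <= n)%nat -> sumR f k = 0).
   { induction k; simpl; intros; auto. rewrite IHk by lia. rewrite (H k) by lia. lra. }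
   rewrite Z0 by lia. lra.
 - rewrite IHn; [| intros; apply H; lia| lia]. rewrite (H n); [lra|lia|auto].
Qed.

Lemma mv_le_const n P h (z : nat -> R) c :
  (forall l, (l < n)%nat -> 0 <= P h l) -> sumR (P h) n = 1 ->
  (forall l, (l < n)%nat -> 0 < P h l -> z l <= c) -> matvec n P z h <= c.
Proof. intros Hnn Hs Hz. unfold matvec.
 apply Rle_trans with (sumR (fun l => c * P h l) n).
 - apply sumR_le. intros l Hl. destruct (Hnn l Hl) as [Hp|Hp].
   + specialize (Hz l Hl Hp). nra.
   + rewrite <- Hp. lra.
 - rewrite sumR_scal. change (sumR (fun l => P h l) n) with (sumR (P h) n). rewrite Hs; lra.
Qed.

Lemma mv_ge_const n P h (z : nat -> R) c :
  (forall l, (l < n)%nat -> 0 <= P h l) -> sumR (P h) n = 1 ->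
  (forall l, (l < n)%nat -> 0 < P h l -> c <= z l) -> c <= matvec n P z h.
Proof. intros Hnn Hs Hz. unfold matvec.
 apply Rle_trans with (sumR (fun l => c * P h l) n).
 - rewrite sumR_scal. change (sumR (fun l => P h l) n) with (sumR (P h) n). rewrite Hs; lra.
 - apply sumR_le. intros l Hl. destruct (Hnn l Hl) as [Hp|Hp].
   + specialize (Hz l Hl Hp). nra.
   + rewrite <- Hp. lra.
Qed.

Lemma mv_lin n P h (x y : nat -> R) a b :
  matvec n P (fun l => a * x l + b * y l) h = a * matvec n P x h + b * matvec n P y h.
Proof. unfold matvec. rewrite <- !sumR_scal, <- sumR_plus. apply sumR_ext; intros; ring. Qed.

Lemma mv_shift n P h (x : nat -> R) c : sumR (P h) n = 1 ->
  matvec n P (fun l => x l + c) h = matvec n P x h + c.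
Proof. intros Hs. unfold matvec.
 replace (sumR (fun l => P h l * (x l + c)) n) with (sumR (fun l => P h l * x l + c * P h l) n)
   by (apply sumR_ext; intros; ring).
 rewrite sumR_plus, sumR_scal. change (sumR (fun l => P h l) n) with (sumR (P h) n). rewrite Hs; ring.
Qed.

Lemma mv_ext n P h (x y : nat -> R) : (forall l, (l < n)%nat -> x l = y l) -> matvec n P x h = matvec n P y h.
Proof. intros H; unfold matvec; apply sumR_ext; intros; rewrite H; auto. Qed.

Lemma argmax_pred (Pr : nat -> Prop) (f : nat -> R) n :
  (exists s, (s < n)%nat /\ Pr s) ->
  exists s, (s < n)%nat /\ Pr s /\ forall t, (t < n)%nat -> Pr t -> f t <= f s.
Proof. induction n; intros [s [Hs Hp]]; [lia|].
 destruct (classic (exists s, (s < n)%nat /\ Pr s)) as [Hex|Hnex].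
 - destruct (IHn Hex) as [s1 [H1 [H2 H3]]].
   destruct (classic (Pr n)) as [Hpn|Hpn].
   + destruct (Rle_dec (f n) (f s1)).
     * exists s1; repeat split; auto. intros t Ht Hpt. destruct (Nat.eq_dec t n) as [->|]; auto. apply H3; auto; lia.
     * exists n; repeat split; auto. intros t Ht Hpt. destruct (Nat.eq_dec t n) as [->|]; [lra|].
       assert (f t <= f s1) by (apply H3; auto; lia). lra.
   + exists s1; repeat split; auto. intros t Ht Hpt. destruct (Nat.eq_dec t n) as [->|]; [contradiction|]. apply H3; auto; lia.
 - exists n. assert (s = n). { destruct (Nat.eq_dec s n); auto. exfalso; apply Hnex; exists s; split; auto; lia. }
   subst. repeat split; auto. intros t Ht Hpt. destruct (Nat.eq_dec t n) as [->|]; [lra|].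
   exfalso; apply Hnex; exists t; split; auto; lia.
Qed.

Lemma argmin_pred (Pr : nat -> Prop) (f : nat -> R) n :
  (exists s, (s < n)%nat /\ Pr s) ->
  exists s, (s < n)%nat /\ Pr s /\ forall t, (t < n)%nat -> Pr t -> f s <= f t.
Proof. intros H. destruct (argmax_pred Pr (fun x => - f x) n H) as [s [A [B C]]].
 exists s; repeat split; auto. intros t Ht Hp. specialize (C t Ht Hp). lra. Qed.

Lemma fold_max_ge (L : list R) a : a <= fold_right Rmax a L /\ forall x, In x L -> x <= fold_right Rmax a L.
Proof. induction L as [|b L IHL]; simpl; split.
 - lra.
 - tauto.
 - destruct IHL. apply Rle_trans with (fold_right Rmax a L); auto. apply Rmax_r.
 - intros x [->|Hx]. apply Rmax_l. destruct IHL as [_ H]. apply Rle_trans with (fold_right Rmax a L); auto. apply Rmax_r.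
Qed.

Lemma fold_max_attain (L : list R) a : fold_right Rmax a L = a \/ In (fold_right Rmax a L) L.
Proof. induction L as [|b L IHL]; simpl; auto. destruct (Rle_dec b (fold_right Rmax a L)).
 - rewrite Rmax_right by auto. destruct IHL; auto.
 - rewrite Rmax_left by lra. auto.
Qed.

Lemma fold_min_le (L : list R) a : fold_right Rmin a L <= a /\ forall x, In x L -> fold_right Rmin a L <= x.
Proof. induction L as [|b L IHL]; simpl; split.
 - lra.
 - tauto.
 - destruct IHL. apply Rle_trans with (fold_right Rmin a L); auto. apply Rmin_r.
 - intros x [->|Hx]. apply Rmin_l. destruct IHL as [_ H]. apply Rle_trans with (fold_right Rmin a L); auto. apply Rmin_r.
Qed.

Lemma fold_min_attain (L : list R) a : fold_right Rmin a L = a \/ In (fold_right Rmin a L) L.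
Proof. induction L as [|b L IHL]; simpl; auto. destruct (Rle_dec b (fold_right Rmin a L)).
 - rewrite Rmin_left by auto. auto.
 - rewrite Rmin_right by lra. destruct IHL; auto.
Qed.

Lemma maxI_attain n f : (0 < n)%nat -> exists j, (j < n)%nat /\ maxI n f = f j.
Proof. intros Hn. unfold maxI. destruct (fold_max_attain (map f (seq 0 n)) (f 0%nat)) as [H|H].
 - exists 0%nat; split; auto.
 - apply in_map_iff in H. destruct H as [j [Hj Hin]]. apply in_seq in Hin. exists j; split; [lia|auto].
Qed.

Lemma minI_attain n f : (0 < n)%nat -> exists j, (j < n)%nat /\ minI n f = f j.
Proof. intros Hn. unfold minI. destruct (fold_min_attain (map f (seq 0 n)) (f 0%nat)) as [H|H].
 - exists 0%nat; split; auto.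
 - apply in_map_iff in H. destruct H as [j [Hj Hin]]. apply in_seq in Hin. exists j; split; [lia|auto].
Qed.

Lemma hilbert_nonneg n f : 0 <= hilbert n f.
Proof. unfold hilbert, maxI, minI. destruct (fold_max_ge (map f (seq 0 n)) (f 0%nat)).
 destruct (fold_min_le (map f (seq 0 n)) (f 0%nat)). lra. Qed.

Lemma hilbert_le n f C : (forall j l, (j < n)%nat -> (l < n)%nat -> f j - f l <= C) -> 0 <= C -> hilbert n f <= C.
Proof. intros H HC. destruct n.
 - unfold hilbert, maxI, minI; simpl. lra.
 - destruct (maxI_attain (S n) f) as [j [Hj E1]]; [lia|]. destruct (minI_attain (S n) f) as [l [Hl E2]]; [lia|].
   unfold hilbert. rewrite E1, E2. auto.
Qed.

Lemma zero_lemma (X C : R) : 0 <= C -> (forall e, 0 < e < 1 -> Rabs X <= e * C) -> X = 0.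
Proof. intros HC H. destruct (Req_dec X 0) as [|Hne]; auto. exfalso.
 assert (Ha : 0 < Rabs X) by (apply Rabs_pos_lt; auto).
 set (e := Rmin (1/2) (Rabs X / (C + 1))).
 assert (He1 : e <= Rabs X / (C+1)) by apply Rmin_r.
 assert (He2 : e <= 1/2) by apply Rmin_l.
 assert (He0 : 0 < e). { unfold e. apply Rmin_glb_lt; [lra|]. apply Rdiv_lt_0_compat; lra. }
 specialize (H e ltac:(lra)).
 assert (e * (C + 1) <= Rabs X). { apply Rmult_le_compat_r with (r := C+1) in He1; [|lra].
   replace (Rabs X / (C + 1) * (C + 1)) with (Rabs X) in He1 by (field; lra). auto. }
 nra.
Qed.

Lemma omax_char (L : list nat) (g : nat -> trop) :
  (fold_right omax None (map g L) = None /\ forall x, In x L -> g x = None) \/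
  exists y, fold_right omax None (map g L) = Some y /\ (exists x, In x L /\ g x = Some y) /\
            (forall x t, In x L -> g x = Some t -> t <= y).
Proof. induction L as [|a L IH]; simpl.
 - left; split; auto; tauto.
 - destruct IH as [[E H]|[y [E [[x [Hx Hg]] H]]]]; rewrite E.
   + destruct (g a) as [t|] eqn:Ga; simpl.
     * right. exists t; split; auto. split. exists a; auto. intros x0 t' [<-|Hx0] Hg0. rewrite Ga in Hg0; inversion Hg0; lra.
       rewrite H in Hg0; auto; discriminate.
     * left; split; auto. intros x [<-|Hx]; auto.
   + destruct (g a) as [t|] eqn:Ga; simpl.
     * right. exists (Rmax t y). split; auto. split.
       -- destruct (Rle_dec t y). rewrite Rmax_right by auto. exists x; auto. rewrite Rmax_left by lra. exists a; auto.
       -- intros x' t' [<-|Hx'] Hg'. rewrite Ga in Hg'; inversion Hg'; subst; apply Rmax_l.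
          apply Rle_trans with y; [eapply H; eauto| apply Rmax_r].
     * right. exists y; split; auto. split. exists x; auto. intros x' t' [<-|Hx'] Hg'. rewrite Ga in Hg'; discriminate. eauto.
Qed.

Lemma emin_char (L : list nat) (g : nat -> ext) : (forall x, In x L -> g x <> Ninf) ->
  (fold_right emin Pinf (map g L) = Pinf /\ forall x, In x L -> g x = Pinf) \/
  exists r, fold_right emin Pinf (map g L) = Fin r /\ (exists x, In x L /\ g x = Fin r) /\
            (forall x t, In x L -> g x = Fin t -> r <= t).
Proof. induction L as [|a L IH]; simpl; intros HN.
 - left; split; auto; tauto.
 - assert (IH' := IH (fun x Hx => HN x (or_intror Hx))).
   assert (Ha := HN a (or_introl eq_refl)).
   destruct IH' as [[E H]|[y [E [[x [Hx Hg]] H]]]]; rewrite E.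
   + destruct (g a) as [|t|] eqn:Ga; simpl; try congruence.
     * right. exists t; split; auto. split. exists a; auto. intros x0 t' [<-|Hx0] Hg0. rewrite Ga in Hg0; inversion Hg0; lra.
       rewrite H in Hg0; auto; discriminate.
     * left; split; auto. intros x [<-|Hx]; auto.
   + destruct (g a) as [|t|] eqn:Ga; simpl; try congruence.
     * right. exists (Rmin t y). split; auto. split.
       -- destruct (Rle_dec t y). rewrite Rmin_left by auto. exists a; auto. rewrite Rmin_right by lra. exists x; auto.
       -- intros x' t' [<-|Hx'] Hg'. rewrite Ga in Hg'; inversion Hg'; subst; apply Rmin_l.
          apply Rle_trans with y; [apply Rmin_r| eapply H; eauto].
     * right. exists y; split; auto. split. exists x; auto. intros x' t' [<-|Hx'] Hg'. rewrite Ga in Hg'; discriminate. eauto.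
Qed.

Definition Ytop (q : nat) (B : nat -> nat -> trop) (y : nat -> R) (i : nat) : R :=
  match tprod q B y i with Some v => v | None => 0 end.

Lemma Y_char q B y i : (exists h, (h < q)%nat /\ B i h <> None) ->
  tprod q B y i = Some (Ytop q B y i) /\
  (exists h b, (h < q)%nat /\ B i h = Some b /\ Ytop q B y i = b + y h) /\
  (forall h b, (h < q)%nat -> B i h = Some b -> b + y h <= Ytop q B y i).
Proof. intros [h0 [Hh0 Hb0]]. unfold Ytop.
 destruct (omax_char (seq 0 q) (fun j => match B i j with None => None | Some c => Some (c + y j) end))
   as [[E H]|[v [E [[x [Hx Hg]] H]]]].
 - exfalso. specialize (H h0 (proj2 (in_seq q 0 h0) ltac:(lia))). destruct (B i h0); congruence.
 - assert (E' : tprod q B y i = Some v) by exact E. rewrite E'. split; auto. split.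
   + apply in_seq in Hx. destruct (B i x) eqn:Bx; inversion Hg. exists x, r; repeat split; auto; lia.
   + intros h b Hh Hb. apply (H h). apply in_seq; lia. rewrite Hb; auto.
Qed.

Definition Hrows (m q : nat) (B : nat -> nat -> trop) := forall i, (i < m)%nat -> exists h, (h < q)%nat /\ B i h <> None.
Definition Hcols (m n : nat) (A : nat -> nat -> trop) := forall j, (j < n)%nat -> exists i, (i < m)%nat /\ A i j <> None.

Lemma Fop_char m n q A B P x j : Hcols m n A -> Hrows m q B -> (j < n)%nat ->
  (exists i a, (i < m)%nat /\ A i j = Some a /\ Fop m n q A B P x j = - a + Ytop q B (matvec n P x) i) /\
  (forall i a, (i < m)%nat -> A i j = Some a -> Fop m n q A B P x j <= - a + Ytop q B (matvec n P x) i).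
Proof. intros HA HB Hj. unfold Fop.
 set (y := matvec n P x).
 set (g := fun i => match A i j with None => Pinf | Some c => match tprod q B y i with None => Ninf | Some b => Fin (- c + b) end end).
 assert (HT : forall i, In i (seq 0 m) -> tprod q B y i = Some (Ytop q B y i)).
 { intros i Hi. apply in_seq in Hi. apply (Y_char q B y i (HB i ltac:(lia))). }
 destruct (emin_char (seq 0 m) g) as [[E H]|[r [E [[x0 [Hx Hg]] H]]]].
 - intros i Hi. unfold g. rewrite (HT i Hi). destruct (A i j); congruence.
 - exfalso. destruct (HA j Hj) as [i [Hi Ha]]. specialize (H i (proj2 (in_seq m 0 i) ltac:(lia))).
   unfold g in H. rewrite (HT i (proj2 (in_seq m 0 i) ltac:(lia))) in H. destruct (A i j); congruence.
 - assert (E' : tsharp m A (tprod q B y) j = Fin r) by exact E.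
   rewrite E'. split.
   + unfold g in Hg. rewrite (HT x0 Hx) in Hg. apply in_seq in Hx. destruct (A x0 j) eqn:Ax; inversion Hg.
     exists x0, r0; repeat split; auto; lia.
   + intros i a Hi Ha. apply (H i). apply in_seq; lia. unfold g. rewrite Ha, (HT i (proj2 (in_seq m 0 i) ltac:(lia))). auto.
Qed.

Lemma Fop_shift_le m n q A B P x y e j : Hcols m n A -> Hrows m q B -> (j < n)%nat ->
  (forall h, (h < q)%nat -> (forall l, (l < n)%nat -> 0 <= P h l) /\ sumR (P h) n = 1) ->
  (forall l, (l < n)%nat -> x l <= y l + e) ->
  Fop m n q A B P x j <= Fop m n q A B P y j + e.
Proof. intros HA HB Hj HP Hxy.
 destruct (Fop_char m n q A B P y j HA HB Hj) as [[i [a [Hi [Ha Ey]]]] _].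
 destruct (Fop_char m n q A B P x j HA HB Hj) as [_ Hx].
 specialize (Hx i a Hi Ha). rewrite Ey.
 destruct (Y_char q B (matvec n P x) i (HB i Hi)) as [_ [[h [b [Hh [Hb Ex]]]] _]].
 destruct (Y_char q B (matvec n P y) i (HB i Hi)) as [_ [_ Hy]].
 specialize (Hy h b Hh Hb).
 assert (matvec n P x h <= matvec n P y h + e).
 { destruct (HP h Hh) as [Hnn Hs]. rewrite <- mv_shift by auto. unfold matvec. apply sumR_le.
   intros l Hl. specialize (Hnn l Hl). specialize (Hxy l Hl). nra. }
 lra.
Qed.

Definition Pstoch n q (P : nat -> nat -> R) := forall h, (h < q)%nat -> (forall l, (l < n)%nat -> 0 <= P h l) /\ sumR (P h) n = 1.
Definition Prat n q (P : nat -> nat -> R) (Q : nat -> nat -> Z) (M : Z) :=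
  (0 < M)%Z /\ forall h l, (h < q)%nat -> (l < n)%nat -> P h l = IZR (Q h l) / IZR M.

Definition HH n (P : nat -> nat -> R) (row : nat -> nat) (u d : nat -> R) :=
  forall eps, 0 < eps -> exists al, 0 < al < 1 /\ 1 - eps < al /\ exists w : nat -> R,
    (forall j, (j < n)%nat -> w j = d j + al * matvec n P w (row j)) /\
    (forall j, (j < n)%nat -> Rabs (w j - u j) < eps).

Lemma mv_diff_bound n q P h (w u : nat -> R) e : Pstoch n q P -> (h < q)%nat ->
  (forall l, (l < n)%nat -> Rabs (w l - u l) < e) ->
  - e <= matvec n P w h - matvec n P u h <= e.
Proof. intros HP Hh Hwu. destruct (HP h Hh) as [Hnn Hs].
 replace (matvec n P w h - matvec n P u h) with (matvec n P (fun l => 1 * w l + -1 * u l) h)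
   by (rewrite mv_lin; ring).
 split.
 - apply mv_ge_const; auto. intros l Hl _. specialize (Hwu l Hl). apply Rabs_def2 in Hwu. lra.
 - apply mv_le_const; auto. intros l Hl _. specialize (Hwu l Hl). apply Rabs_def2 in Hwu. lra.
Qed.

Lemma eq_of_HH n q P row u d : Pstoch n q P -> (forall j, (j < n)%nat -> (row j < q)%nat) ->
  HH n P row u d -> forall j, (j < n)%nat -> u j = d j + matvec n P u (row j).
Proof. intros HP Hrow H j Hj.
 set (mu := matvec n P u (row j)).
 assert (X0 : u j - d j - mu = 0).
 { apply (zero_lemma _ (2 + Rabs mu)). pose proof (Rabs_pos mu); lra.
   intros e He. destruct (H e ltac:(lra)) as [al [Hal [Hal2 [w [Hw Hc]]]]].
   pose proof (mv_diff_bound n q P (row j) w u e HP (Hrow j Hj) Hc) as Hb.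
   specialize (Hw j Hj). pose proof (Hc j Hj) as Hcj. apply Rabs_def2 in Hcj.
   pose proof (Rle_abs mu). pose proof (Rle_abs (- mu)). rewrite Rabs_Ropp in *.
   fold mu in Hb.
   apply Rabs_le. split; nra. }
 lra.
Qed.

Lemma HH_neg n P row u d : HH n P row u d -> HH n P row (fun l => - u l) (fun l => - d l).
Proof. intros H e He. destruct (H e He) as [al [Hal [Hal2 [w [Hw Hc]]]]].
 exists al; split; auto; split; auto. exists (fun l => - w l). split.
 - intros j Hj. rewrite Hw by auto.
   replace (matvec n P (fun l => - w l) (row j)) with (matvec n P (fun l => -1 * w l + 0 * w l) (row j))
     by (apply mv_ext; intros; ring). rewrite mv_lin. ring.
 - intros j Hj. replace (- w j - - u j) with (- (w j - u j)) by ring. rewrite Rabs_Ropp; auto.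
Qed.

Definition edge n (P : nat -> nat -> R) (row : nat -> nat) s s2 := (s2 < n)%nat /\ 0 < P (row s) s2.

Fixpoint walkV n P row (s t : nat) (L : list nat) : Prop :=
  match L with
  | [] => s = t
  | x :: L' => x = s /\ exists s2, edge n P row s s2 /\ walkV n P row s2 t L'
  end.

Lemma walk_app n P row L1 L2 : forall s t,
  walkV n P row s t (L1 ++ L2) <-> exists mid, walkV n P row s mid L1 /\ walkV n P row mid t L2.
Proof. induction L1 as [|x L1 IH]; simpl; intros s t; split.
 - intros H; exists s; auto.
 - intros [mid [-> H]]; auto.
 - intros [-> [s2 [He Hw]]]. apply IH in Hw. destruct Hw as [mid [H1 H2]]. exists mid. split; eauto.
 - intros [mid [[-> [s2 [He Hw]]] H2]]. split; auto. exists s2; split; auto. apply IH; eauto.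
Qed.

Lemma walk_snoc n P row s x t L : walkV n P row s x L -> edge n P row x t -> walkV n P row s t (L ++ [x]).
Proof. intros H He. apply walk_app. exists x; split; auto. simpl. split; auto. exists t; auto. Qed.

Lemma walk_lt n P row L : forall s t, walkV n P row s t L -> (s < n)%nat -> forall x, In x (t :: L) -> (x < n)%nat.
Proof. induction L as [|y L IH]; simpl; intros s t H Hs x Hx.
 - subst. destruct Hx as [<-|[]]; auto.
 - destruct H as [-> [s2 [[Hs2 _] Hw]]]. destruct Hx as [<-|[<-|Hx]].
   + eapply IH; eauto. left; auto.
   + auto.
   + eapply IH; eauto. right; auto.
Qed.

Lemma good_walk n P row s L : forall t, walkV n P row s t L ->
  exists L', walkV n P row s t L' /\ NoDup (t :: L') /\ NoDup (map row L').
Proof. induction L as [|x L IH] using rev_ind; intros t H.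
 - exists []. simpl in *. repeat split; auto. constructor; auto. constructor. constructor.
 - apply walk_app in H. destruct H as [mid [Hw1 Hw2]]. simpl in Hw2.
   destruct Hw2 as [-> [s2 [He ->]]].
   destruct (IH mid Hw1) as [L2 [Hw [Hnd Hndr]]].
   apply NoDup_cons_iff in Hnd. destruct Hnd as [HxL2 HndL2].
   destruct (in_dec Nat.eq_dec t (mid :: L2)) as [Hin|Hnin].
   + destruct Hin as [<-|Hin].
     * exists L2; repeat split; auto. constructor; auto.
     * apply in_split in Hin. destruct Hin as [L1 [L3 ->]].
       apply walk_app in Hw. destruct Hw as [mid2 [Hw1' Hw2']]. simpl in Hw2'. destruct Hw2' as [-> _].
       exists L1. split; auto. split.
       -- constructor. intros Hc. apply (NoDup_remove_2 L1 L3 mid2 HndL2). apply in_or_app; auto.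
          apply NoDup_app_remove_r in HndL2; auto.
       -- rewrite map_app in Hndr. apply NoDup_app_remove_r in Hndr; auto.
   + destruct (in_dec Nat.eq_dec (row mid) (map row L2)) as [Hr|Hr].
     * apply in_map_iff in Hr. destruct Hr as [y [Hy HyL]].
       apply in_split in HyL. destruct HyL as [L1 [L3 ->]].
       apply walk_app in Hw. destruct Hw as [mid2 [Hw1' Hw2']]. simpl in Hw2'. destruct Hw2' as [-> _].
       exists (L1 ++ [mid2]). split.
       -- apply walk_snoc; auto. unfold edge in *. rewrite Hy. auto.
       -- replace (L1 ++ mid2 :: L3) with ((L1 ++ [mid2]) ++ L3) in * by (rewrite <- app_assoc; auto).
          split.
          ++ constructor. intros Hc. apply Hnin. right. apply in_or_app; auto.
             apply NoDup_app_remove_r in HndL2; auto.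
          ++ rewrite map_app in Hndr. apply NoDup_app_remove_r in Hndr; auto.
     * exists (L2 ++ [mid]). split.
       -- apply walk_snoc; auto.
       -- split.
          ++ constructor. intros Hc. apply in_app_or in Hc. destruct Hc as [Hc|[Hc|[]]]; apply Hnin; [right|left]; auto.
             apply NoDup_app; auto. constructor; auto. constructor. intros a Ha [<-|[]]; auto.
          ++ rewrite map_app. apply NoDup_app; auto. constructor; auto. constructor. simpl. intros a Ha [<-|[]]; auto.
Qed.

Lemma posb_true x : 0 < x -> posb x = true.
Proof. unfold posb. destruct (Rlt_dec 0 x); auto; contradiction. Qed.

Lemma det_one n q P h s2 : Pstoch n q P -> (h < q)%nat -> (s2 < n)%nat -> 0 < P h s2 ->
  nondetb n P h = false -> P h s2 = 1.
Proof. intros HP Hh Hs Hp Hnd. destruct (HP h Hh) as [Hnn Hsum].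
 rewrite <- Hsum. symmetry. apply sumR_single; auto. intros l Hl Hne.
 destruct (Hnn l Hl) as [Hpos|]; auto. exfalso.
 assert (nondetb n P h = true).
 { unfold nondetb. apply existsb_exists. exists l. split. apply in_seq; lia.
   apply existsb_exists. exists s2. split. apply in_seq; lia.
   rewrite !posb_true by auto. simpl. apply Nat.eqb_neq in Hne. rewrite Hne. auto. }
 congruence.
Qed.

Lemma prob_lb n q P Q M h s2 : Prat n q P Q M -> (h < q)%nat -> (s2 < n)%nat -> 0 < P h s2 -> / IZR M <= P h s2.
Proof. intros [HM HQ] Hh Hs Hp. rewrite HQ in * by auto.
 assert (HMr : 0 < IZR M) by (apply IZR_lt; auto).
 assert (0 < IZR (Q h s2)).
 { apply Rmult_lt_reg_r with (/ IZR M). apply Rinv_0_lt_compat; auto. rewrite Rmult_0_l. auto. }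
 apply lt_IZR in H. assert (1 <= IZR (Q h s2)) by (apply IZR_le; lia).
 unfold Rdiv. assert (0 < / IZR M) by (apply Rinv_0_lt_compat; auto). nra.
Qed.

Lemma step_factor n q P Q M h s2 : Pstoch n q P -> Prat n q P Q M -> (h < q)%nat -> (s2 < n)%nat -> 0 < P h s2 ->
  1 <= P h s2 * IZR M ^ (if nondetb n P h then 1 else 0).
Proof. intros HP HR Hh Hs Hp. destruct (nondetb n P h) eqn:E.
 - simpl. rewrite Rmult_1_r. pose proof (prob_lb n q P Q M h s2 HR Hh Hs Hp).
   destruct HR as [HM _]. assert (HMr : 0 < IZR M) by (apply IZR_lt; auto).
   apply Rmult_le_compat_r with (r := IZR M) in H; [|lra]. rewrite Rinv_l in H; lra.
 - simpl. rewrite (det_one n q P h s2) by auto. lra.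
Qed.

Definition cnt n P (row : nat -> nat) (L : list nat) := length (filter (fun x => nondetb n P (row x)) L).

Lemma gap_walk n q P Q M row u d D K :
  Pstoch n q P -> Prat n q P Q M -> (forall j, (j < n)%nat -> (row j < q)%nat) ->
  (forall j, (j < n)%nat -> u j = d j + matvec n P u (row j)) ->
  (forall l, (l < n)%nat -> u l <= K) -> (forall j, (j < n)%nat -> d j <= D) -> 0 <= D ->
  forall L s t, walkV n P row s t L -> (s < n)%nat ->
  K - u t <= (K - u s + D * INR (length L)) * IZR M ^ cnt n P row L.
Proof. intros HP HR Hrow Hu HK Hd HD.
 assert (HM1 : 1 <= IZR M) by (destruct HR as [HM _]; apply IZR_le; lia).
 induction L as [|x L IH]; intros s t Hw Hs; simpl in Hw.
 - subst. unfold cnt. simpl. lra.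
 - destruct Hw as [-> [s2 [[Hs2 Hp] Hw]]].
   specialize (IH s2 t Hw Hs2).
   set (h := row s) in *.
   assert (Hh : (h < q)%nat) by (apply Hrow; auto).
   destruct (HP h Hh) as [Hnn Hsum].
   assert (Hstep : P h s2 * (K - u s2) <= K - u s + D).
   { assert (Hmv : matvec n P u h <= P h s2 * u s2 + (1 - P h s2) * K).
     { unfold matvec.
       assert (E1 : sumR (fun l => P h l * u l) n = K * sumR (P h) n - sumR (fun l => P h l * (K - u l)) n).
       { rewrite <- sumR_scal. rewrite <- sumR_minus. apply sumR_ext. intros; ring. }
       rewrite E1, Hsum.
       assert (P h s2 * (K - u s2) <= sumR (fun l => P h l * (K - u l)) n).
       { apply (sumR_single_le (fun l => P h l * (K - u l))); auto. intros l Hl.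
         specialize (Hnn l Hl). specialize (HK l Hl). nra. }
       lra. }
     rewrite (Hu s Hs). specialize (Hd s Hs). fold h. lra. }
   pose proof (step_factor n q P Q M h s2 HP HR Hh Hs2 Hp) as Hf.
   set (e := if nondetb n P h then 1%nat else 0%nat) in *.
   assert (Hcnt : cnt n P row (s :: L) = (e + cnt n P row L)%nat).
   { unfold cnt, e; simpl. fold h. destruct (nondetb n P h); simpl; auto. }
   rewrite Hcnt, pow_add. change (length (s :: L)) with (S (length L)).
   assert (HKs2 : 0 <= K - u s2) by (specialize (HK s2 Hs2); lra).
   assert (HKs : 0 <= K - u s) by (specialize (HK s Hs); lra).
   assert (He1 : 1 <= IZR M ^ e) by (apply pow_R1_Rle; auto).
   assert (Hc1 : 1 <= IZR M ^ cnt n P row L) by (apply pow_R1_Rle; auto).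
   assert (Hl0 : 0 <= INR (length L)) by apply pos_INR.
   rewrite S_INR.
   assert (H2 : K - u s2 <= (K - u s + D) * IZR M ^ e).
   { apply Rle_trans with (P h s2 * IZR M ^ e * (K - u s2)). nra.
     replace (P h s2 * IZR M ^ e * (K - u s2)) with (IZR M ^ e * (P h s2 * (K - u s2))) by ring.
     assert (0 <= IZR M ^ e) by lra. nra. }
   set (me := IZR M ^ e) in *. set (mc := IZR M ^ cnt n P row L) in *.
   apply Rle_trans with ((K - u s2 + D * INR (length L)) * mc); auto.
   assert (K - u s2 + D * INR (length L) <= (K - u s + D * (INR (length L) + 1)) * me).
   { assert (0 <= D * INR (length L)) by (apply Rmult_le_pos; auto).
     assert (D * INR (length L) <= D * INR (length L) * me) by nra. nra. }
   nra.
Qed.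

Lemma closed_nonpos n q P row u d j0 : Pstoch n q P -> (forall j, (j < n)%nat -> (row j < q)%nat) ->
  HH n P row u d -> (j0 < n)%nat ->
  exists l, (l < n)%nat /\ (exists L, walkV n P row j0 l L) /\ u l <= 0.
Proof. intros HP Hrow H Hj0.
 pose proof (eq_of_HH n q P row u d HP Hrow H) as Hu.
 set (R := fun l => exists L, walkV n P row j0 l L).
 destruct (classic (exists l, (l < n)%nat /\ R l /\ u l <= 0)) as [Hex|Hn]; auto. exfalso.
 assert (Hpos : forall l, (l < n)%nat -> R l -> 0 < u l).
 { intros l Hl HRl. destruct (Rlt_dec 0 (u l)); auto. exfalso; apply Hn; exists l; repeat split; auto; lra. }
 assert (HR0 : R j0) by (exists []; simpl; auto).
 assert (Hcl : forall l l2, (l < n)%nat -> R l -> (l2 < n)%nat -> 0 < P (row l) l2 -> R l2).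
 { intros l l2 Hl [L HL] Hl2 Hp. exists (L ++ [l]). apply walk_snoc; auto. split; auto. }
 destruct (argmin_pred R u n) as [s1 [Hs1 [HRs1 Hmin]]]; [exists j0; auto|].
 set (mu := u s1). assert (Hmu : 0 < mu) by (apply Hpos; auto).
 destruct (H mu Hmu) as [al [Hal [_ [w [Hw Hc]]]]].
 set (z := fun l => w l - u l).
 destruct (argmax_pred R z n) as [j [Hj [HRj Hmax]]]; [exists j0; auto|].
 destruct (HP (row j) (Hrow j Hj)) as [Hnn Hs].
 assert (Emv : matvec n P w (row j) = matvec n P z (row j) + matvec n P u (row j)).
 { rewrite <- (Rmult_1_l (matvec n P z (row j))), <- (Rmult_1_l (matvec n P u (row j))).
   rewrite <- mv_lin. apply mv_ext. intros l Hl. unfold z. ring. }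
 assert (Hz : matvec n P z (row j) <= z j).
 { apply mv_le_const; auto. intros l Hl Hp. apply Hmax; auto. apply (Hcl j l); auto. }
 assert (Hm : mu <= matvec n P u (row j)).
 { apply mv_ge_const; auto. intros l Hl Hp. apply Hmin; auto. apply (Hcl j l); auto. }
 assert (Ezj : z j = al * matvec n P z (row j) - (1 - al) * matvec n P u (row j)).
 { unfold z at 1. rewrite (Hw j Hj), (Hu j Hj), Emv. ring. }
 assert (Hprod : (1 - al) * (z j + mu) <= 0).
 { assert (al * matvec n P z (row j) <= al * z j) by (apply Rmult_le_compat_l; lra).
   assert ((1 - al) * mu <= (1 - al) * matvec n P u (row j)) by (apply Rmult_le_compat_l; lra). nra. }
 assert (Hzj : z j <= - mu).
 { destruct (Rle_dec (z j) (- mu)); auto. assert (0 < (1 - al) * (z j + mu)) by (apply Rmult_lt_0_compat; lra). lra. }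
 assert (Hz0 : z j0 <= z j) by (apply Hmax; auto).
 specialize (Hc j0 Hj0). apply Rabs_def2 in Hc. destruct Hc. assert (z j0 = w j0 - u j0) by reflexivity. lra.
Qed.

Lemma core n q P Q M row u d D : Pstoch n q P -> Prat n q P Q M ->
  (forall j, (j < n)%nat -> (row j < q)%nat) ->
  HH n P row u d -> (forall j, (j < n)%nat -> d j <= D) -> 0 <= D ->
  forall j, (j < n)%nat -> u j <= D * INR (n - 1) * IZR M ^ Nat.min (num_nondet n q P) (n - 1).
Proof. intros HP HR Hrow H Hd HD j Hj.
 pose proof (eq_of_HH n q P row u d HP Hrow H) as Hu.
 destruct (argmax_pred (fun _ => True) u n) as [j0 [Hj0 [_ Hmax]]]; [exists j; auto|].
 destruct (closed_nonpos n q P row u d j0 HP Hrow H Hj0) as [l [Hl [[L HL] Hul]]].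
 destruct (good_walk n P row j0 L l HL) as [L' [HL' [Hnd Hndr]]].
 pose proof (gap_walk n q P Q M row u d D (u j0) HP HR Hrow Hu (fun l Hl => Hmax l Hl I) Hd HD L' j0 l HL' Hj0) as G.
 assert (HM1 : 1 <= IZR M) by (destruct HR as [HM _]; apply IZR_le; lia).
 assert (Hlen : (length L' <= n - 1)%nat).
 { assert (length (l :: L') <= length (seq 0 n))%nat.
   { apply NoDup_incl_length; auto. intros x Hx. apply in_seq. pose proof (walk_lt n P row L' j0 l HL' Hj0 x Hx). lia. }
   rewrite length_seq in H0. simpl in H0. lia. }
 assert (Hcnt1 : (cnt n P row L' <= length L')%nat) by (unfold cnt; apply filter_length_le).
 assert (Hcnt2 : (cnt n P row L' <= num_nondet n q P)%nat).
 { assert (E : cnt n P row L' = length (filter (nondetb n P) (map row L'))).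
   { unfold cnt. clear. induction L' as [|x L IH]; simpl; auto. destruct (nondetb n P (row x)); simpl; auto. }
   rewrite E. unfold num_nondet. apply NoDup_incl_length. apply NoDup_filter; auto.
   intros x Hx. apply filter_In in Hx. destruct Hx as [Hx Hb]. apply filter_In. split; auto.
   apply in_map_iff in Hx. destruct Hx as [y [<- Hy]]. apply in_seq. split; [lia|].
   simpl. apply Hrow. apply (walk_lt n P row L' j0 l HL' Hj0 y). right; auto. }
 assert (Hpow : IZR M ^ cnt n P row L' <= IZR M ^ Nat.min (num_nondet n q P) (n - 1)).
 { apply Rle_pow; auto. lia. }
 assert (Hlen' : INR (length L') <= INR (n - 1)) by (apply le_INR; auto).
 assert (Hp1 : 1 <= IZR M ^ cnt n P row L') by (apply pow_R1_Rle; auto).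
 assert (HL0 : 0 <= INR (length L')) by apply pos_INR.
 replace (u j0 - u j0) with 0 in G by ring.
 assert (u j <= u j0) by (apply Hmax; auto).
 assert (D * INR (length L') <= D * INR (n - 1)) by (apply Rmult_le_compat_l; auto).
 assert (0 <= D * INR (length L')) by (apply Rmult_le_pos; auto).
 assert ((0 + D * INR (length L')) * IZR M ^ cnt n P row L' <= D * INR (n - 1) * IZR M ^ Nat.min (num_nondet n q P) (n - 1)).
 { rewrite Rplus_0_l. apply Rmult_le_compat; auto. lra. }
 lra.
Qed.

Definition Freq (Pr : R -> Prop) := forall dl, 0 < dl -> exists al, 0 < al < 1 /\ 1 - dl < al /\ Pr al.

Lemma Freq_true : Freq (fun _ => True).
Proof. intros dl Hdl. exists (Rmax (1/2) (1 - dl/2)). split; [split|split]; auto.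
 - apply Rlt_le_trans with (1/2); [lra| apply Rmax_l].
 - apply Rmax_lub_lt; lra.
 - apply Rlt_le_trans with (1 - dl/2); [lra| apply Rmax_r].
Qed.

Lemma pigeon (X : Type) (L : list X) (Pr : R -> Prop) (Qx : X -> R -> Prop) :
  Freq Pr -> (forall al, 0 < al < 1 -> Pr al -> exists x, In x L /\ Qx x al) ->
  exists x, In x L /\ Freq (fun al => Pr al /\ Qx x al).
Proof. revert Pr. induction L as [|x L IH]; intros Pr HF HQ.
 - exfalso. destruct (HF 1 ltac:(lra)) as [al [Hal [_ Hp]]]. destruct (HQ al Hal Hp) as [x [[] _]].
 - destruct (classic (Freq (fun al => Pr al /\ Qx x al))) as [H|H].
   + exists x; split; auto. left; auto.
   + unfold Freq in H. apply not_all_ex_not in H. destruct H as [d0 H].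
     apply imply_to_and in H. destruct H as [Hd0 H].
     assert (H' : forall al, 0 < al < 1 -> 1 - d0 < al -> ~ (Pr al /\ Qx x al)).
     { intros al Hal Hal2 Hc. apply H. exists al; auto. }
     destruct (IH (fun al => Pr al /\ 1 - d0 < al)) as [y [Hy HFy]].
     * intros dl Hdl. destruct (HF (Rmin dl d0) (Rmin_glb_lt _ _ _ Hdl Hd0)) as [al [Hal [Hal2 Hp]]].
       exists al. split; auto. split. pose proof (Rmin_l dl d0); lra. split; auto. pose proof (Rmin_r dl d0); lra.
     * intros al Hal [Hp Hd]. destruct (HQ al Hal Hp) as [z [[<-|Hz] Hq]].
       -- exfalso. apply (H' al Hal Hd); auto.
       -- exists z; auto.
     * exists y. split; [right; auto|]. intros dl Hdl. destruct (HFy dl Hdl) as [al [Hal [Hal2 [[Hp _] Hq]]]].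
       exists al; auto.
Qed.

Lemma policy (X : Type) (x0 : X) (L : list X) (G : R -> X -> nat -> Prop) n :
  (forall al, 0 < al < 1 -> forall j, (j < n)%nat -> exists x, In x L /\ G al x j) ->
  forall K, (K <= n)%nat -> exists c : nat -> X, Freq (fun al => forall j, (j < K)%nat -> G al (c j) j).
Proof. intros HG K. induction K as [|K IH]; intros HK.
 - exists (fun _ => x0). intros dl Hdl. destruct (Freq_true dl Hdl) as [al [H1 [H2 _]]]. exists al; split; [auto|split; [auto|intros; lia]].
 - destruct (IH ltac:(lia)) as [c Hc].
   destruct (pigeon X L _ (fun x al => G al x K) Hc) as [x [Hx HF]].
   + intros al Hal _. apply HG; auto; lia.
   + exists (fun j => if Nat.eqb j K then x else c j). intros dl Hdl. destruct (HF dl Hdl) as [al [H1 [H2 [H3 H4]]]].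
     exists al; repeat split; auto; try lra. intros j Hj. destruct (Nat.eqb j K) eqn:E.
     * apply Nat.eqb_eq in E; subst; auto.
     * apply Nat.eqb_neq in E. apply H3. lia.
Qed.

Lemma unif_lemma n (g : R -> nat -> R) (vs : nat -> R) :
  (forall j, (j < n)%nat -> limit1_in (fun al => g al j) (fun al => 0 < al < 1) (vs j) 1) ->
  forall e, 0 < e -> exists dl, 0 < dl /\ forall al, 0 < al < 1 -> Rabs (al - 1) < dl ->
    forall j, (j < n)%nat -> Rabs (g al j - vs j) < e.
Proof. induction n as [|n IH]; intros H e He.
 - exists 1; split; [lra|]. intros; lia.
 - destruct (IH (fun j Hj => H j ltac:(lia)) e He) as [d1 [Hd1 H1]].
   pose proof (H n ltac:(lia)) as Hn. unfold limit1_in, limit_in in Hn. simpl in Hn. unfold R_dist in Hn.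
   destruct (Hn e He) as [d2 [Hd2 H2]].
   exists (Rmin d1 d2). split; [apply Rmin_glb_lt; auto|].
   intros al Hal Hd j Hj. destruct (Nat.eq_dec j n) as [->|Hne].
   + apply H2. split; auto. pose proof (Rmin_r d1 d2); lra.
   + apply H1; auto. pose proof (Rmin_l d1 d2); lra. lia.
Qed.

Lemma W_ge m n q A B i j h a b : (i < m)%nat -> (j < n)%nat -> (h < q)%nat -> A i j = Some a -> B i h = Some b ->
  Rabs (a - b) <= Wconst m n q A B.
Proof. intros Hi Hj Hh Ha Hb. unfold Wconst. apply (proj2 (fold_max_ge _ 0)).
 apply in_flat_map. exists i. split. apply in_seq; lia.
 apply in_flat_map. exists j. split. apply in_seq; lia.
 apply in_flat_map. exists h. split. apply in_seq; lia.
 rewrite Ha, Hb. left; auto.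
Qed.

Lemma W_nonneg m n q A B : 0 <= Wconst m n q A B.
Proof. unfold Wconst. apply (proj1 (fold_max_ge _ 0)). Qed.

Definition optR (o : trop) : R := match o with Some a => a | None => 0 end.

Lemma Rabs_le_between x a : Rabs x <= a -> - a <= x <= a.
Proof. intros H. pose proof (Rle_abs x). pose proof (Rle_abs (- x)). rewrite Rabs_Ropp in *. lra. Qed.

Lemma INR_pred_sq n : INR (n - 1) <= INR n ^ 2.
Proof. destruct n as [|n']. simpl. lra. replace (S n' - 1)%nat with n' by lia. rewrite S_INR. simpl.
  pose proof (pos_INR n'). nra. Qed.

Theorem mainTheorem10
  (m n q : nat) (A B : nat -> nat -> trop) (P : nat -> nat -> R)
  (Q : nat -> nat -> Z) (M : Z)
  (HAcol : forall j, (j < n)%nat -> exists i, (i < m)%nat /\ A i j <> None)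
  (HBrow : forall i, (i < m)%nat -> exists h, (h < q)%nat /\ B i h <> None)
  (HAint : forall i j a, (i < m)%nat -> (j < n)%nat -> A i j = Some a -> exists z : Z, a = IZR z)
  (HBint : forall i h b, (i < m)%nat -> (h < q)%nat -> B i h = Some b -> exists z : Z, b = IZR z)
  (HM : (0 < M)%Z)
  (HPQ : forall i l, (i < q)%nat -> (l < n)%nat -> P i l = IZR (Q i l) / IZR M)
  (HPnn : forall i l, (i < q)%nat -> (l < n)%nat -> 0 <= P i l)
  (HPsum : forall i, (i < q)%nat -> sumR (P i) n = 1)
  (lam : R) (v0 : nat -> R)
  (Hbias : is_bias n (Fop m n q A B P) v0 lam)
  (va : R -> nat -> R)
  (Hva : forall alpha, 0 < alpha < 1 -> forall j, (j < n)%nat ->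
         va alpha j = Fop m n q A B P (fun l => alpha * va alpha l) j)
  (vstar : nat -> R)
  (Hlim : forall j, (j < n)%nat ->
          limit1_in (fun alpha => va alpha j - lam / (1 - alpha))
                    (fun alpha => 0 < alpha < 1) (vstar j) 1) :
  exists RF : R,
    is_inf (fun r => exists u, is_bias n (Fop m n q A B P) u lam /\ r = hilbert n u) RF /\
    RF <= hilbert n vstar /\
    hilbert n vstar <= 10 * INR n ^ 2 * Wconst m n q A B
                        * IZR M ^ (Nat.min (num_nondet n q P) (n - 1)).
Proof.
 assert (HPs : Pstoch n q P) by (intros h Hh; split; [intros; apply HPnn; auto| apply HPsum; auto]).
 assert (HPr : Prat n q P Q M) by (split; auto).
 assert (HA : Hcols m n A) by exact HAcol.
 assert (HB : Hrows m q B) by exact HBrow.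
 set (W := Wconst m n q A B).
 assert (HW0 : 0 <= W) by apply W_nonneg.
 pose proof (unif_lemma n (fun al j => va al j - lam / (1 - al)) vstar Hlim) as Hunif. simpl in Hunif.
 set (G := fun al (p : nat * nat) j =>
   (fst p < m)%nat /\ (snd p < q)%nat /\ A (fst p) j <> None /\ B (fst p) (snd p) <> None /\
   Fop m n q A B P (fun l => al * va al l) j =
     - optR (A (fst p) j) + optR (B (fst p) (snd p)) + matvec n P (fun l => al * va al l) (snd p)).
 assert (HG : forall al, 0 < al < 1 -> forall j, (j < n)%nat ->
          exists x, In x (list_prod (seq 0 m) (seq 0 q)) /\ G al x j).
 { intros al Hal j Hj.
   destruct (Fop_char m n q A B P (fun l => al * va al l) j HA HB Hj) as [[i [a [Hi [Ha E]]]] _].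
   destruct (Y_char q B (matvec n P (fun l => al * va al l)) i (HB i Hi)) as [_ [[h [b [Hh [Hb E2]]]] _]].
   exists (i, h). split. apply in_prod; apply in_seq; lia.
   unfold G; simpl. rewrite Ha, Hb. simpl. repeat split; auto; try congruence. rewrite E, E2. ring. }
 destruct (policy (nat * nat) (0%nat, 0%nat) _ G n HG n (le_n n)) as [c Hc].
 set (row := fun j => snd (c j)).
 set (r := fun j => - optR (A (fst (c j)) j) + optR (B (fst (c j)) (snd (c j)))).
 set (d := fun j => r j - lam).
 assert (Hgood1 : forall j, (j < n)%nat -> G (1/2) (c j) j \/ True) by auto.
 destruct (Hc 1 ltac:(lra)) as [al1 [Hal1 [_ Hg1]]].
 assert (Hrow : forall j, (j < n)%nat -> (row j < q)%nat).
 { intros j Hj. destruct (Hg1 j Hj) as [_ [H _]]. auto. }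
 assert (Hr : forall j, (j < n)%nat -> - W <= r j <= W).
 { intros j Hj. destruct (Hg1 j Hj) as [Hi [Hh [Ha [Hb _]]]].
   unfold r. destruct (A (fst (c j)) j) as [a|] eqn:Ea; [|congruence].
   destruct (B (fst (c j)) (snd (c j))) as [b|] eqn:Eb; [|congruence]. simpl.
   pose proof (W_ge m n q A B _ _ _ a b Hi Hj Hh Ea Eb). fold W in H.
   apply Rabs_le_between in H. lra. }
 assert (HHv : HH n P row vstar d).
 { intros e He. destruct (Hunif e He) as [dl [Hdl Hu]].
   destruct (Hc (Rmin dl e) (Rmin_glb_lt _ _ _ Hdl He)) as [al [Hal [Hal2 Hg]]].
   pose proof (Rmin_l dl e). pose proof (Rmin_r dl e).
   exists al. split; auto. split; [lra|].
   exists (fun l => va al l - lam / (1 - al)). split.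
   - intros j Hj. destruct (Hg j Hj) as [_ [_ [_ [_ E]]]].
     rewrite (Hva al Hal j Hj), E.
     destruct (HPs (row j) (Hrow j Hj)) as [_ Hs].
     assert (E1 : matvec n P (fun l => al * va al l) (snd (c j)) = al * matvec n P (va al) (snd (c j))).
     { replace (matvec n P (fun l => al * va al l) (snd (c j))) with (matvec n P (fun l => al * va al l + 0 * va al l) (snd (c j)))
         by (apply mv_ext; intros; ring). rewrite mv_lin. ring. }
     assert (E2 : matvec n P (va al) (row j) = matvec n P (fun l => va al l - lam / (1 - al)) (row j) + lam / (1 - al)).
     { rewrite <- mv_shift by auto. apply mv_ext. intros; ring. }
     rewrite E1. fold (row j). rewrite E2. unfold d, r, row. field. lra.
   - intros j Hj. apply Hu; auto. rewrite Rabs_left by lra. lra. }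
 pose proof (eq_of_HH n q P row vstar d HPs Hrow HHv) as Hu.
 assert (Hlam : forall j, (j < n)%nat -> - W <= lam <= W).
 { intros j Hj.
   destruct (argmax_pred (fun _ => True) vstar n) as [j0 [Hj0 [_ Hmax]]]; [exists j; auto|].
   destruct (argmin_pred (fun _ => True) vstar n) as [j1 [Hj1 [_ Hmin]]]; [exists j; auto|].
   destruct (HPs (row j0) (Hrow j0 Hj0)) as [Hnn0 Hs0].
   destruct (HPs (row j1) (Hrow j1 Hj1)) as [Hnn1 Hs1].
   assert (matvec n P vstar (row j0) <= vstar j0) by (apply mv_le_const; auto).
   assert (vstar j1 <= matvec n P vstar (row j1)) by (apply mv_ge_const; auto).
   pose proof (Hu j0 Hj0). pose proof (Hu j1 Hj1). pose proof (Hr j0 Hj0). pose proof (Hr j1 Hj1).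
   unfold d in *. lra. }
 set (BND := 2 * W * INR (n - 1) * IZR M ^ Nat.min (num_nondet n q P) (n - 1)).
 assert (Hup : forall j, (j < n)%nat -> vstar j <= BND).
 { intros j Hj. unfold BND. apply (core n q P Q M row vstar d (2 * W) HPs HPr Hrow HHv); auto; try lra.
   intros j' Hj'. pose proof (Hr j' Hj'). pose proof (Hlam j' Hj'). unfold d. lra. }
 assert (Hlo : forall j, (j < n)%nat -> - vstar j <= BND).
 { intros j Hj. unfold BND.
   apply (core n q P Q M row (fun l => - vstar l) (fun l => - d l) (2 * W) HPs HPr Hrow (HH_neg _ _ _ _ _ HHv)); auto; try lra.
   intros j' Hj'. pose proof (Hr j' Hj'). pose proof (Hlam j' Hj'). unfold d. lra. }
 assert (HM1 : 1 <= IZR M) by (apply IZR_le; lia).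
 assert (HBND0 : 0 <= BND).
 { unfold BND. apply Rmult_le_pos. apply Rmult_le_pos. lra. apply pos_INR. apply pow_le. lra. }
 assert (Hhil : hilbert n vstar <= 2 * BND).
 { apply hilbert_le; [|lra]. intros j l Hj Hl. pose proof (Hup j Hj). pose proof (Hlo l Hl). lra. }
 assert (Hbv : is_bias n (Fop m n q A B P) vstar lam).
 { intros j Hj.
   set (Cv := sumR (fun l => Rabs (vstar l)) n).
   assert (HCv : forall l, (l < n)%nat -> Rabs (vstar l) <= Cv).
   { intros l Hl. apply (sumR_single_le (fun l => Rabs (vstar l))); auto. intros; apply Rabs_pos. }
   assert (HCv0 : 0 <= Cv) by (apply sumR_nonneg; intros; apply Rabs_pos).
   assert (X0 : Fop m n q A B P vstar j - lam - vstar j = 0).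
   { apply (zero_lemma _ (3 + Cv)); [lra|]. intros e He.
     destruct (Hunif e ltac:(lra)) as [dl [Hdl Hun]].
     set (al := Rmax (1/2) (1 - Rmin dl e / 2)).
     pose proof (Rmin_l dl e). pose proof (Rmin_r dl e).
     assert (0 < Rmin dl e) by (apply Rmin_glb_lt; lra).
     assert (Hal : 0 < al < 1).
     { split. apply Rlt_le_trans with (1/2); [lra|apply Rmax_l]. apply Rmax_lub_lt; lra. }
     assert (Hal2 : 1 - Rmin dl e / 2 <= al) by apply Rmax_r.
     set (c0 := lam / (1 - al)).
     set (w := fun l => va al l - c0).
     assert (Hwv : forall l, (l < n)%nat -> Rabs (w l - vstar l) < e).
     { intros l Hl. apply Hun; auto. rewrite Rabs_left by lra. lra. }
     set (x := fun l => al * va al l). set (y := fun l => al * w l).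
     assert (Ex : Fop m n q A B P x j = va al j) by (symmetry; apply Hva; auto).
     assert (Exy1 : Fop m n q A B P x j <= Fop m n q A B P y j + al * c0).
     { apply Fop_shift_le; auto. intros l Hl. unfold x, y, w. lra. }
     assert (Exy2 : Fop m n q A B P y j <= Fop m n q A B P x j + - (al * c0)).
     { apply Fop_shift_le; auto. intros l Hl. unfold x, y, w. lra. }
     set (e0 := e * (2 + Cv)).
     assert (Hvy : forall l, (l < n)%nat -> Rabs (vstar l - y l) <= e0).
     { intros l Hl. pose proof (Hwv l Hl) as K1. pose proof (HCv l Hl) as K2.
       apply Rabs_def2 in K1. destruct K1.
       apply Rabs_le_between in K2.
       unfold y, e0. apply Rabs_le. split; nra. }
     assert (Hvy1 : Fop m n q A B P vstar j <= Fop m n q A B P y j + e0).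
     { apply Fop_shift_le; auto. intros l Hl. pose proof (Hvy l Hl) as K1. apply Rabs_le_between in K1. lra. }
     assert (Hvy2 : Fop m n q A B P y j <= Fop m n q A B P vstar j + e0).
     { apply Fop_shift_le; auto. intros l Hl. pose proof (Hvy l Hl) as K1. apply Rabs_le_between in K1. lra. }
     assert (Ec : (1 - al) * c0 = lam) by (unfold c0; field; lra).
     pose proof (Hwv j Hj) as Hwj. apply Rabs_def2 in Hwj. destruct Hwj.
     unfold w in *. unfold e0 in *.
     apply Rabs_le. split; nra. }
   lra. }
 set (Sset := fun r => exists u, is_bias n (Fop m n q A B P) u lam /\ r = hilbert n u).
 set (E := fun x => Sset (- x)).
 assert (HbE : bound E).
 { exists 0. intros x [u [_ Hx]]. pose proof (hilbert_nonneg n u). lra. }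
 assert (HexE : exists x, E x).
 { exists (- hilbert n vstar). unfold E, Sset. exists vstar. split; auto. ring. }
 destruct (completeness E HbE HexE) as [lub [Hub Hleast]].
 exists (- lub). split; [split|split].
 - intros s Hs. assert (E (- s)) by (unfold E; rewrite Ropp_involutive; auto). specialize (Hub _ H). lra.
 - intros b Hb. assert (lub <= - b).
   { apply Hleast. intros x Hx. specialize (Hb _ Hx). lra. }
   lra.
 - assert (E (- hilbert n vstar)) by (unfold E, Sset; exists vstar; split; auto; ring). specialize (Hub _ H). lra.
 - apply Rle_trans with (2 * BND); auto. unfold BND.
   assert (Hn : INR (n - 1) <= INR n ^ 2) by apply INR_pred_sq.
   assert (0 <= W * IZR M ^ Nat.min (num_nondet n q P) (n - 1)) by (apply Rmult_le_pos; auto; apply pow_le; lra).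
   fold W. nra.
Qed.
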